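(* Let $P$ be a priority forest on $[n]_0$. The edge labeling of $I_P=[\hat0,P]$ given by the labels $\lambda$ (whose sequences along maximal chains are the Jordan–Hölder permutations) is an EL-labeling.
   Context: $[n]_0=\{0,\dots,n\}$. A priority forest on $[n]_0$ is a rooted forest with vertex set $[n]_0$ whose component trees $T_0,T_1,\dots$ are increasing (each non-root vertex has a larger label than its parent) and satisfy: for $j<k$ every label of $T_j$ is smaller than every label of $T_k$. $\Pi(n)$ is the poset of priority forests on $[n]_0$ ordered by inclusion of edge sets, with an extra top element; $\hat0$ is the edgeless forest. For priority forests $Q\lessdot Q'$ (i.e. $Q'$ is obtained from $Q$ by adding one edge), the label $\lambda(Q,Q')$ is the larger endpoint of the unique edge in $E(Q')\setminus E(Q)$. For a maximal chain $x=s_0\lessdot s_1\lessdot\cdots\lessdot s_k=y$ of an interval $[x,y]$, its label sequence is $(\lambda(s_0,s_1),\dots,\lambda(s_{k-1},s_k))$; the chain is increasing if this sequence is weakly increasing. An edge labeling of a poset is an EL-labeling if every interval $[x,y]$ has exactly one increasing maximal chain, and this chain's label sequence is lexicographically smaller than that of every other maximal chain of $[x,y]$. *)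

(* Defs.v *)
From mathcomp Require Import all_boot all_order.
Set Implicit Arguments. Unset Strict Implicit. Unset Printing Implicit Defensive.

(* Vertices of [n]_0 = {0,...,n} are 'I_n.+1.  A (rooted, increasing) forest
   is given by its edge set: an edge (p, c) joins parent p to child c with p < c. *)
Definition vert (n : nat) := 'I_n.+1.
Definition edge (n : nat) := (vert n * vert n)%type.
Definition forest (n : nat) := {set edge n}.

Definition adj n (F : forest n) : rel (vert n) :=
  fun u v => ((u, v) \in F) || ((v, u) \in F).

Definition samecomp n (F : forest n) (u v : vert n) : bool := connect (adj F) u v.

(* Priority forest: a rooted forest whose trees are increasing (every edge goes
   from a parent to a larger child, every vertex has at most one parent), and whose
   trees can be listed T_0, T_1, ... with all labels of T_j smaller than all labels
   of T_k for j < k: i.e. if x < y lie in different trees then every label of the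
   tree of x is smaller than every label of the tree of y. *)
Definition priority_forest n (F : forest n) : Prop :=
  [/\ (forall e, e \in F -> (e.1 < e.2)%N),
      (forall p1 p2 c, (p1, c) \in F -> (p2, c) \in F -> p1 = p2)
    & (forall x y u v, ~~ samecomp F x y -> (x < y)%N ->
         samecomp F x u -> samecomp F y v -> (u < v)%N)].

(* Cover relation Q <. Q' in the poset Pi(n) (top element irrelevant here). *)
Definition pf_cover n (Q Q' : forest n) : Prop :=
  [/\ priority_forest Q, priority_forest Q', Q \proper Q'
    & forall R : forest n, priority_forest R -> ~ (Q \proper R /\ R \proper Q')].

(* label: larger endpoint of the edge in E(Q') \ E(Q) (unique for a cover) *)
Definition pf_label n (Q Q' : forest n) : nat :=
  \max_(e in Q' :\: Q) (nat_of_ord e.2).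

(* the chain x = s_0 <. s_1 <. ... <. s_k, given as x and the list [s_1;...;s_k] *)
Fixpoint is_cover_chain n (x : forest n) (c : seq (forest n)) : Prop :=
  match c with
  | [::] => True
  | y :: c' => pf_cover x y /\ is_cover_chain y c'
  end.

Definition maximal_chain n (x y : forest n) (c : seq (forest n)) : Prop :=
  is_cover_chain x c /\ last x c = y.

Definition label_seq n (x : forest n) (c : seq (forest n)) : seq nat :=
  pairmap (@pf_label n) x c.

Definition increasing_chain n (x : forest n) (c : seq (forest n)) : Prop :=
  sorted leq (label_seq x c).

Fixpoint lexlt (s t : seq nat) : bool :=
  match s, t with
  | _, [::] => false
  | [::], _ :: _ => true
  | a :: s', b :: t' => (a < b)%N || ((a == b) && lexlt s' t')
  end.

Definition EL_labeling_of_interval n (P : forest n) : Prop :=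
  forall x y : forest n,
    priority_forest x -> priority_forest y -> x \subset y -> y \subset P ->
    exists c, [/\ maximal_chain x y c, increasing_chain x c,
      (forall c', maximal_chain x y c' -> increasing_chain x c' -> c' = c)
    & (forall c', maximal_chain x y c' -> c' <> c ->
         lexlt (label_seq x c) (label_seq x c'))].

(* Main.v *)
Require Import Defs.
From mathcomp Require Import all_boot all_order.
From mathcomp Require Import zify.

Set Implicit Arguments. Unset Strict Implicit.
Section Aux.
Variable n : nat.
Implicit Types (x y s F : forest n) (v w p q u a b : vert n).

Definition LC F := forall p c w, (p, c) \in F -> (p < w < c)%N ->
  exists q : vert n, (q, w) \in F.
Definition isroot F v := [forall q : vert n, (q, v) \notin F].
Definition gmax F v : nat := \max_(r : vert n | (r <= v)%N && isroot F r) (r : nat).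

Definition incr F := forall e, e \in F -> (e.1 < e.2)%N.

Lemma adj_sym F : symmetric (adj F).
Proof. by move=> a b; rewrite /adj orbC. Qed.

Lemma g_edge F p (c : vert n) : incr F -> LC F -> (p, c) \in F -> gmax F c = gmax F p.
Proof.
move=> inc lc hpc; apply: eq_bigl => r.
case: (boolP (isroot F r)) => hr; rewrite ?andbT ?andbF //.
have hpc' := inc _ hpc; rewrite /= in hpc'.
apply/idP/idP => hle; last by lia.
rewrite leqNgt; apply/negP => hpr.
case: (ltngtP r c) => hrc; [ | by lia | ].
- have [q hq] := lc p c r hpc (introT andP (conj hpr hrc)).
  by move/forallP: hr => /(_ q); rewrite hq.
- have E : r = c by apply: val_inj.
  by move/forallP: hr => /(_ p); rewrite E hpc.
Qed.

Lemma g_mono F a b : (a <= b)%N -> (gmax F a <= gmax F b)%N.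
Proof.
move=> hab; apply/bigmax_leqP => r /andP [hra hr].
by apply: leq_bigmax_cond; rewrite hr andbT (leq_trans hra).
Qed.

Lemma g_root F v : isroot F v -> gmax F v = v.
Proof.
move=> hv; apply/eqP; rewrite eqn_leq; apply/andP; split.
  by apply/bigmax_leqP => r /andP [].
by apply: (@leq_bigmax_cond _ (fun r : vert n => (r <= v)%N && isroot F r) (fun r : vert n => (r : nat)) v); rewrite leqnn hv.
Qed.

Lemma g_conn F : incr F -> LC F -> forall v, exists2 r : vert n,
  samecomp F v r & (r : nat) = gmax F v.
Proof.
move=> inc lc v; have [k hk] := ubnP v; elim: k v hk => // k IH v hv.
case: (boolP (isroot F v)) => hr.
  by exists v; [exact: connect0 | rewrite g_root].
move: hr; rewrite negb_forall => /existsP [q]; rewrite negbK => hq.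
have hqv := inc _ hq; rewrite /= in hqv.
have hqk : (q < k)%N by move: hv hqv; lia.
have [r h1 h2] := IH q hqk.
exists r; last by rewrite h2 (g_edge inc lc hq).
apply: connect_trans h1; apply: connect1; by rewrite /adj hq orbT.
Qed.

Lemma g_conn_inv F u v : incr F -> LC F -> samecomp F u v -> gmax F u = gmax F v.
Proof.
move=> inc lc /connectP [s]; elim: s u => [|w s IH] u /=; first by move=> _ ->.
move=> /andP [huw hp] E; rewrite -(IH w hp E).
case/orP: huw => h; first by rewrite (g_edge inc lc h).
by rewrite (g_edge inc lc h).
Qed.

Lemma LC_prio3 F : incr F -> LC F -> forall a b u v, ~~ samecomp F a b -> (a < b)%N ->
         samecomp F a u -> samecomp F b v -> (u < v)%N.
Proof.
move=> inc lc a b u v nab ab au bv.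
have ga := g_conn_inv inc lc au; have gb := g_conn_inv inc lc bv.
have neq : gmax F a != gmax F b.
  apply/eqP => E.
  have [ra h1 h2] := g_conn inc lc a; have [rb h3 h4] := g_conn inc lc b.
  have Er : ra = rb by apply: val_inj; rewrite /= h2 h4 E.
  move/negP: nab; apply; apply: connect_trans h1 _.
  by rewrite Er (sym_connect_sym (adj_sym F)).
have lt : (gmax F a < gmax F b)%N by rewrite ltn_neqAle neq g_mono // ltnW.
rewrite ltnNge; apply/negP => vu.
have := g_mono F vu; rewrite -ga -gb; lia.
Qed.

Definition parf F v : vert n := if [pick q | (q, v) \in F] is Some q then q else v.
Definition rt F v := iter n.+1 (parf F) v.

Lemma parf_le F v : incr F -> (parf F v <= v)%N.
Proof.
move=> inc; rewrite /parf; case: pickP => [q hq|_] //.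
by have := inc _ hq; rewrite /=; lia.
Qed.

Lemma iter_fixp F : incr F -> forall k v, (v < k)%N ->
  parf F (iter k (parf F) v) = iter k (parf F) v.
Proof.
move=> inc; elim=> // k IH v hv; rewrite iterSr.
case: (eqVneq (parf F v) v) => E.
  by rewrite E iter_fix.
apply: IH; have := parf_le v inc.
have : (parf F v : nat) <> v by move=> h; move/eqP: E; apply; apply: val_inj.
lia.
Qed.

Lemma iter_le F k v : incr F -> (iter k (parf F) v <= v)%N.
Proof.
move=> inc; elim: k => //= k IH; exact: leq_trans (parf_le _ inc) IH.
Qed.

Lemma rt_parf F v : incr F -> rt F (parf F v) = rt F v.
Proof. by move=> inc; rewrite /rt -iterSr iterS iter_fixp. Qed.

Lemma parf_edge F u v : (forall p1 p2 c, (p1, c) \in F -> (p2, c) \in F -> p1 = p2) ->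
  (u, v) \in F -> parf F v = u.
Proof.
move=> up huv; rewrite /parf; case: pickP => [q hq|/(_ u)].
  exact: up hq huv.
by rewrite huv.
Qed.

Lemma rt_conn F u v : incr F ->
  (forall p1 p2 c, (p1, c) \in F -> (p2, c) \in F -> p1 = p2) ->
  samecomp F u v -> rt F u = rt F v.
Proof.
move=> inc up /connectP [s]; elim: s u => [|w s IH] u /=; first by move=> _ ->.
move=> /andP [huw hp] E; rewrite -(IH w hp E).
case/orP: huw => h.
  by rewrite -(parf_edge up h) rt_parf.
by rewrite -(parf_edge up h) rt_parf.
Qed.

Lemma prio_LC F : priority_forest F -> LC F.
Proof.
case=> inc up c3 p c w hpc /andP [hpw hwc].
case: (pickP (fun q : vert n => (q, w) \in F)) => [q hq|none]; first by exists q.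
exfalso.
have fw : parf F w = w by rewrite /parf; case: pickP => // q; rewrite none.
have rw : rt F w = w by rewrite /rt iter_fix.
case: (boolP (samecomp F p w)) => hs.
  have := rt_conn inc up hs; rewrite rw => E.
  have := iter_le n.+1 p inc; rewrite -/(rt F p) E; lia.
have := c3 p w c w hs hpw (connect1 _) (connect0 _ _).
rewrite /adj hpc /= => /(_ isT); lia.
Qed.

Lemma minchild (A : {set edge n}) : (exists e, e \in A) ->
  exists2 e, e \in A & forall f, f \in A -> ((e.2 : nat) <= f.2)%N.
Proof.
case=> e he; case: (arg_minnP (fun f : edge n => (f.2 : nat)) he) => f hf hmin.
by exists f.
Qed.

Lemma add_prio x y (e0 : edge n) : priority_forest x -> priority_forest y ->
  x \subset y -> e0 \in y :\: x -> (forall f, f \in y :\: x -> ((e0.2 : nat) <= f.2)%N) ->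
  priority_forest (e0 |: x).
Proof.
move=> px py sxy he0 hmin; have [incy upy c3y] := py.
move: (he0); rewrite inE => /andP [he0x he0y].
have sF : e0 |: x \subset y by rewrite subUset sub1set he0y sxy.
have incF : incr (e0 |: x) by move=> e he; apply: incy; exact: (subsetP sF).
split => //.
  by move=> p1 p2 c h1 h2; apply: (upy _ _ c); apply: (subsetP sF).
apply: LC_prio3 => //.
move=> p c w; rewrite in_setU1 => /orP [/eqP E | hx] hw.
  have hy : (p, c) \in y by rewrite E.
  have [q hq] := prio_LC py hy hw.
  case: (boolP ((q, w) \in x)) => hqx.
    by exists q; rewrite in_setU1 hqx orbT.
  have := hmin (q, w); rewrite inE hqx hq => /(_ isT) /=.
  rewrite -E /=; move: hw; lia.
have [q hq] := prio_LC px hx hw.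
by exists q; rewrite in_setU1 hq orbT.
Qed.

Lemma cover_add x s : pf_cover x s -> exists2 e, e \notin x & s = e |: x.
Proof.
case=> px ps pxs nomid; have [sxs [e' he's he'x]] := properP pxs.
have : exists e, e \in s :\: x by exists e'; rewrite inE he'x.
case/minchild => e0 he0 hmin.
have pa := add_prio px ps sxs he0 hmin.
move: he0; rewrite inE => /andP [he0x he0s].
exists e0 => //.
case: (eqVneq (e0 |: x) s) => // hne; exfalso.
apply: (nomid _ pa); split.
  rewrite properEneq subsetUr andbT; apply/eqP => E.
  by move: (setU11 e0 x); rewrite -E (negbTE he0x).
by rewrite properEneq hne /= subUset sub1set he0s sxs.
Qed.

Lemma cover_label x (e : edge n) : e \notin x -> pf_label x (e |: x) = e.2.
Proof.
move=> he; rewrite /pf_label.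
have -> : (e |: x) :\: x = [set e].
  apply/setP => f; rewrite !inE; case: (eqVneq f e) => [->|_]; first by rewrite he.
  by rewrite orFb andNb.
by rewrite big_set1.
Qed.

Lemma cover_one x (e : edge n) : priority_forest x -> priority_forest (e |: x) ->
  e \notin x -> pf_cover x (e |: x).
Proof.
move=> px pe he; split => //.
  rewrite properEneq subsetUr andbT; apply/eqP => E.
  by move: (setU11 e x); rewrite -E (negbTE he).
move=> R _ [h1 h2].
have := proper_card h1; have := proper_card h2; rewrite cardsU1 he; lia.
Qed.

Lemma chain_sub x c : is_cover_chain x c -> x \subset last x c.
Proof.
elim: c x => [|s c IH] x /=; first by rewrite subxx.
move=> [[_ _ pxs _] hc]; exact: subset_trans (proper_sub pxs) (IH _ hc).
Qed.

Lemma chain_nil x c : is_cover_chain x c -> last x c = x -> c = [::].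
Proof.
case: c => //= s c [[_ _ pxs _] hc] E.
have := chain_sub hc; rewrite E => sx.
by have := proper_sub_trans pxs sx; rewrite properxx.
Qed.

Lemma decomp x y s1 c : maximal_chain x y (s1 :: c) ->
  exists e1 : edge n, [/\ e1 \notin x, e1 \in y, s1 = e1 |: x,
     maximal_chain s1 y c & pf_label x s1 = e1.2].
Proof.
case=> [[hcov hc] hl]; have [e1 he1x Es] := cover_add hcov.
have sy : s1 \subset y by rewrite -hl; exact: chain_sub hc.
exists e1; split => //.
- by apply: (subsetP sy); rewrite Es setU11.
- by rewrite Es cover_label.
Qed.

Lemma chain_labels x y c : maximal_chain x y c ->
  (forall e, e \in y :\: x -> (e.2 : nat) \in label_seq x c) /\
  (forall l, l \in label_seq x c -> exists2 e, e \in y :\: x & l = e.2).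
Proof.
elim: c x => [|s c IH] x.
  case=> _ /= <-; rewrite setDv; split => // e; by rewrite inE.
move=> mc; have [e1 [he1x he1y Es mc' lab]] := decomp mc.
have [m l] := IH _ mc'.
have ls : label_seq x (s :: c) = (e1.2 : nat) :: label_seq s c by rewrite /label_seq /= lab.
rewrite ls; split.
  move=> e he; rewrite inE; case: (eqVneq e e1) => [->|ne]; first by rewrite eqxx.
  apply/orP; right; apply: m; move: he; rewrite Es !inE (negbTE ne) /=.
  by move=> /andP [-> ->].
move=> k; rewrite inE => /orP [/eqP -> | hk].
  by exists e1 => //; rewrite inE he1x.
have [e he ->] := l k hk; exists e => //.
move: he; rewrite Es !inE negb_or => /andP [/andP [_ ->] ->].
by [].
Qed.

Lemma same_child y (e0 e1 : edge n) : priority_forest y -> e0 \in y -> e1 \in y ->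
  (e0.2 : nat) = e1.2 -> e0 = e1.
Proof.
case=> _ upy _ h0 h1 E.
have E2 : e0.2 = e1.2 by apply: val_inj.
have h0' : (e0.1, e0.2) \in y by rewrite -surjective_pairing.
have h1' : (e1.1, e0.2) \in y by rewrite E2 -surjective_pairing.
have E1 := upy _ _ _ h0' h1'.
by move: E1 E2; case: (e0) => a b; case: (e1) => a' b' /= -> ->.
Qed.

Lemma main k x y : (#|y :\: x| < k)%N -> priority_forest x -> priority_forest y ->
  x \subset y ->
  exists c, [/\ maximal_chain x y c, increasing_chain x c,
      (forall c', maximal_chain x y c' -> increasing_chain x c' -> c' = c)
    & (forall c', maximal_chain x y c' -> c' <> c ->
         lexlt (label_seq x c) (label_seq x c'))].
Proof.
elim: k x => // k IH x hk px py sxy.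
case: (set_0Vmem (y :\: x)) => [E | [e' he']].
  have Exy : x = y.
    apply/eqP; rewrite eqEsubset sxy /=.
    by rewrite -setD_eq0 E.
  subst y; exists [::]; split => //.
  - by move=> c' [hc hl] _; exact: chain_nil hc hl.
  - by move=> c' [hc hl] ne; have := chain_nil hc hl.
have [e0 he0 hmin] := minchild (ex_intro _ e' he').
have px0 := add_prio px py sxy he0 hmin.
move: (he0); rewrite inE => /andP [he0x he0y].
set x0 := e0 |: x.
have cov := cover_one px px0 he0x.
have lab0 : pf_label x x0 = e0.2 by rewrite cover_label.
have sx0y : x0 \subset y by rewrite subUset sub1set he0y sxy.
have ssub : y :\: x0 \subset y :\: x by apply: setDS; rewrite subsetUr.
have hk' : (#|y :\: x0| < k)%N.
  have : y :\: x0 \proper y :\: x.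
    apply/properP; split => //; exists e0 => //.
    by rewrite /x0 !inE eqxx.
  move/proper_card; move: hk; lia.
have [c0 [mc0 ic0 uc0 lc0]] := IH x0 hk' px0 py sx0y.
have ls : label_seq x (x0 :: c0) = (e0.2 : nat) :: label_seq x0 c0.
  by rewrite /label_seq /= lab0.
have first : forall s1 c'', maximal_chain x y (s1 :: c'') ->
   (s1 = x0 /\ maximal_chain x0 y c'' /\ label_seq x (s1 :: c'') = (e0.2 : nat) :: label_seq x0 c'')
   \/ exists e1 : edge n, [/\ (e0.2 < e1.2)%N, maximal_chain s1 y c'',
        label_seq x (s1 :: c'') = (e1.2 : nat) :: label_seq s1 c'' &
        (e0.2 : nat) \in label_seq s1 c''].
  move=> s1 c'' mc; have [e1 [he1x he1y Es mc' lab]] := decomp mc.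
  have ls1 : label_seq x (s1 :: c'') = (e1.2 : nat) :: label_seq s1 c''.
    by rewrite /label_seq /= lab.
  case: (eqVneq e1 e0) => [E1|ne].
    left; have Es0 : s1 = x0 by rewrite Es E1.
    by split => //; rewrite -Es0; split => //; rewrite ls1 E1.
  right; exists e1; split => //.
    have le : ((e0.2 : nat) <= e1.2)%N by apply: hmin; rewrite inE he1x.
    rewrite ltn_neqAle le andbT; apply/eqP => E2.
    by move/eqP: ne; apply; apply: esym; apply: (same_child py he0y he1y).
  have [m _] := chain_labels mc'; apply: m.
  rewrite Es !inE he0y negb_or he0x andbT andbT.
  by apply/eqP => E; move/eqP: ne; apply.
exists (x0 :: c0); split.
- by split; [split => //; exact: mc0.1 | exact: mc0.2].
- rewrite /increasing_chain ls /= path_sortedE; last exact: leq_trans.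
  rewrite ic0 andbT; apply/allP => l hl.
  have [_ lab] := chain_labels mc0.
  have [f hf ->] := lab l hl; apply: hmin; exact: (subsetP ssub).
- case=> [|s1 c''] mc' ic'.
    by case: mc' => _ /= E; move: he0; rewrite E setDv inE.
  case: (first _ _ mc') => [[Es [mc'' _]] | [e1 [hlt mc'' ls1 hm]]].
    rewrite Es; congr cons; apply: uc0 => //.
    by move: ic'; rewrite /increasing_chain /label_seq /= Es => /path_sorted.
  move: ic'; rewrite /increasing_chain ls1 /= path_sortedE; last exact: leq_trans.
  move=> /andP [/allP /(_ _ hm) hle _]; move: hlt hle; lia.
- case=> [|s1 c''] mc' ne.
    by case: mc' => _ /= E; move: he0; rewrite E setDv inE.
  rewrite ls.
  case: (first _ _ mc') => [[Es [mc'' ls1]] | [e1 [hlt mc'' ls1 hm]]].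
    rewrite ls1 /= ltnn eqxx /=; apply: lc0 => //.
    by move=> E; apply: ne; rewrite Es E.
  by rewrite ls1 /= hlt.
Qed.

End Aux.

Theorem lemma5p7 (n : nat) (P : forest n) :
  priority_forest P -> EL_labeling_of_interval P.
Proof.
move=> _ x y px py sxy _.
have [k hk] := ubnP #|y :\: x|.
exact: main hk px py sxy.
Qed.
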